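(* Let $\boldsymbol{x}_p=[i_p,v_p]^{\intercal}$ be the unique $T$-periodic solution of the switched system, i.e. the solution with initial value $$\boldsymbol{x}_p(0)=\left(I-\mathrm{e}^{\frac{T}{2}A_2}\mathrm{e}^{\frac{T}{2}A_1}\right)^{-1}\mathrm{e}^{\frac{T}{2}A_2}A_1^{-1}\left(\mathrm{e}^{\frac{T}{2}A_1}-I\right)\boldsymbol{b}_1 .$$ Then $i_p(0)=i_p(T/2)=i_p(T)$.
   Context: Let $R,L,C,V_{dc},T>0$. Let $\boldsymbol{x}(t)=[i(t),v(t)]^{\intercal}$. Define $$A_1=\begin{bmatrix}-\frac RL & -\frac1L\\ \frac1C & 0\end{bmatrix},\quad A_2=\begin{bmatrix}-\frac RL & \frac1L\\ -\frac1C & 0\end{bmatrix},\quad \boldsymbol{b}_1=\begin{bmatrix}\frac{V_{dc}}L\\ 0\end{bmatrix}.$$ The switched system on $t\ge0$ is: $\boldsymbol{x}'=A_1\boldsymbol{x}+\boldsymbol{b}_1$ on each interval $[(k-1)T,(k-1)T+\frac T2]$ and $\boldsymbol{x}'=A_2\boldsymbol{x}$ on each interval $[(k-1)T+\frac T2,kT]$, $k=1,2,\dots$; solutions are continuous. The matrix $I-\mathrm{e}^{\frac T2A_2}\mathrm{e}^{\frac T2A_1}$ is invertible and the solution with the stated initial value is $T$-periodic. *)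

(* Defs.v *)
From Stdlib Require Import Reals Lra Factorial.
Open Scope R_scope.

Record mat2 := M2 { m11 : R; m12 : R; m21 : R; m22 : R }.
Record vec2 := V2 { vi : R; vv : R }.

Definition mid : mat2 := M2 1 0 0 1.
Definition madd (A B : mat2) : mat2 :=
  M2 (m11 A + m11 B) (m12 A + m12 B) (m21 A + m21 B) (m22 A + m22 B).
Definition msub (A B : mat2) : mat2 :=
  M2 (m11 A - m11 B) (m12 A - m12 B) (m21 A - m21 B) (m22 A - m22 B).
Definition mscale (a : R) (A : mat2) : mat2 :=
  M2 (a * m11 A) (a * m12 A) (a * m21 A) (a * m22 A).
Definition mmul (A B : mat2) : mat2 :=
  M2 (m11 A * m11 B + m12 A * m21 B) (m11 A * m12 B + m12 A * m22 B)
     (m21 A * m11 B + m22 A * m21 B) (m21 A * m12 B + m22 A * m22 B).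
Fixpoint mpow (A : mat2) (n : nat) : mat2 :=
  match n with O => mid | S k => mmul A (mpow A k) end.
Definition mdet (A : mat2) : R := m11 A * m22 A - m12 A * m21 A.
(* inverse of a 2x2 matrix (adjugate / determinant); meaningful when mdet A <> 0 *)
Definition minv (A : mat2) : mat2 :=
  mscale (/ mdet A) (M2 (m22 A) (- m12 A) (- m21 A) (m11 A)).
Definition mvmul (A : mat2) (x : vec2) : vec2 :=
  V2 (m11 A * vi x + m12 A * vv x) (m21 A * vi x + m22 A * vv x).
Definition vadd (x y : vec2) : vec2 := V2 (vi x + vi y) (vv x + vv y).

Fixpoint exp_partial (A : mat2) (t : R) (n : nat) : mat2 :=
  match n with
  | O => mid
  | S k => madd (exp_partial A t k) (mscale (t ^ (S k) / INR (fact (S k))) (mpow A (S k)))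
  end.

Definition is_mexp (A : mat2) (t : R) (E : mat2) : Prop :=
  Un_cv (fun n => m11 (exp_partial A t n)) (m11 E) /\
  Un_cv (fun n => m12 (exp_partial A t n)) (m12 E) /\
  Un_cv (fun n => m21 (exp_partial A t n)) (m21 E) /\
  Un_cv (fun n => m22 (exp_partial A t n)) (m22 E).

Definition Am1 (Rr L C : R) : mat2 := M2 (- (Rr / L)) (- (1 / L)) (1 / C) 0.
Definition Am2 (Rr L C : R) : mat2 := M2 (- (Rr / L)) (1 / L) (- (1 / C)) 0.
Definition bv1 (L Vdc : R) : vec2 := V2 (Vdc / L) 0.

(* the stated initial value
   (I - E2 E1)^{-1} E2 A1^{-1} (E1 - I) b1,  with E1 = e^{T/2 A1}, E2 = e^{T/2 A2} *)
Definition xp0 (Rr L C Vdc : R) (E1 E2 : mat2) : vec2 :=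
  mvmul (minv (msub mid (mmul E2 E1)))
    (mvmul E2 (mvmul (minv (Am1 Rr L C)) (mvmul (msub E1 mid) (bv1 L Vdc)))).

(* Main.v *)
Require Import Defs.
From Stdlib Require Import Reals Lra Lia Factorial.
From Coquelicot Require Import Coquelicot.
Open Scope R_scope.

Lemma dl_ext f g x l : (forall t, f t = g t) -> derivable_pt_lim f x l -> derivable_pt_lim g x l.
Proof. intros H Hf eps He; destruct (Hf eps He) as [d Hd]; exists d; intros h Hh Hh2.
rewrite <- !H; apply Hd; auto. Qed.

Lemma dl_loc f g x l d : 0 < d -> (forall y, Rabs (y - x) < d -> f y = g y) ->
  derivable_pt_lim f x l -> derivable_pt_lim g x l.
Proof. intros Hd H Hf eps He; destruct (Hf eps He) as [d' Hd'].
assert (Hm : 0 < Rmin d d') by (apply Rmin_pos; [lra| apply (cond_pos d')]).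
exists (mkposreal _ Hm); intros h Hh Hh2; simpl in Hh2.
rewrite <- !H. apply Hd'; auto. apply Rlt_le_trans with (1:=Hh2); apply Rmin_r.
replace (x - x) with 0 by ring; rewrite Rabs_R0; lra.
replace (x + h - x) with h by ring. apply Rlt_le_trans with (1:=Hh2); apply Rmin_l.
Qed.

Lemma dl_cont f x l : derivable_pt_lim f x l -> continuity_pt f x.
Proof. intro H; apply derivable_continuous_pt; exists l; exact H. Qed.

Lemma cv_const a : Un_cv (fun _ => a) a.
Proof. intros e He; exists 0%nat; intros; unfold R_dist; rewrite Rminus_diag, Rabs_R0; lra. Qed.

Lemma cv_lin a b u w l1 l2 : Un_cv u l1 -> Un_cv w l2 -> Un_cv (fun n => a * u n + b * w n) (a*l1+b*l2).
Proof. intros H1 H2. apply CV_plus; apply CV_mult; auto; apply cv_const. Qed.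

Lemma cv_S u l : Un_cv u l -> Un_cv (fun n => u (S n)) l.
Proof. intros H e He; destruct (H e He) as [N HN]; exists N; intros; apply HN; lia. Qed.

Lemma lim_eq x l u w : Un_cv u l -> Un_cv w 0 -> (forall m, Rabs (x - u m) <= w m) -> x = l.
Proof. intros Hu Hw Hb. destruct (Req_dec x l) as [|Hne]; auto; exfalso.
assert (He : 0 < Rabs (x - l) / 2). { assert (Hz : x - l <> 0) by (intro; apply Hne; lra). apply Rabs_pos_lt in Hz; lra. }
destruct (Hu _ He) as [N1 H1]; destruct (Hw _ He) as [N2 H2].
specialize (H1 (max N1 N2) ltac:(lia)); specialize (H2 (max N1 N2) ltac:(lia)).
specialize (Hb (max N1 N2)). unfold R_dist in *. rewrite Rminus_0_r in H2.
pose proof (Rabs_triang (x - u (max N1 N2)) (u (max N1 N2) - l)).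
replace (x - u (max N1 N2) + (u (max N1 N2) - l)) with (x - l) in H by ring.
pose proof (Rle_abs (w (max N1 N2))). lra. Qed.

Ltac mat := repeat match goal with X : mat2 |- _ => destruct X end; unfold mmul, madd, msub, mscale, mid; simpl; f_equal; ring.

Lemma mmul_assoc A B Cm : mmul A (mmul B Cm) = mmul (mmul A B) Cm.
Proof. mat. Qed.
Lemma mmul_addr A X Y : mmul A (madd X Y) = madd (mmul A X) (mmul A Y).
Proof. mat. Qed.
Lemma mmul_addl A X Y : mmul (madd X Y) A = madd (mmul X A) (mmul Y A).
Proof. mat. Qed.
Lemma mmul_scr A a X : mmul A (mscale a X) = mscale a (mmul A X).
Proof. mat. Qed.
Lemma mmul_scl A a X : mmul (mscale a X) A = mscale a (mmul X A).
Proof. mat. Qed.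
Lemma mmul_id_r A : mmul A mid = A.
Proof. mat. Qed.
Lemma mmul_id_l A : mmul mid A = A.
Proof. mat. Qed.

Lemma mpow_comm A k : mmul A (mpow A k) = mmul (mpow A k) A.
Proof. induction k; simpl. rewrite mmul_id_r, mmul_id_l; auto.
rewrite IHk at 1. rewrite mmul_assoc. auto. Qed.

Lemma exp_comm A s n : mmul A (exp_partial A s n) = mmul (exp_partial A s n) A.
Proof. induction n; simpl. rewrite mmul_id_r, mmul_id_l; auto.
rewrite mmul_addr, mmul_addl, IHn, mmul_scr, mmul_scl. f_equal. f_equal.
change (mpow A (S n)) with (mmul A (mpow A n)). rewrite <- mmul_assoc, <- mpow_comm.
auto. Qed.

Definition cf k s := s ^ k / INR (fact k).
Lemma exp_unf A s n : exp_partial A s (S n) = madd (exp_partial A s n) (mscale (cf (S n) s) (mpow A (S n))).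
Proof. reflexivity. Qed.

Lemma dcf k s : derivable_pt_lim (cf (S k)) s (cf k s).
Proof. unfold cf. apply dl_ext with (mult_real_fct (/ INR (fact (S k))) (fun y => y ^ (S k))).
intros; unfold mult_real_fct; unfold Rdiv; ring.
replace (s ^ k / INR (fact k)) with (/ INR (fact (S k)) * (INR (S k) * s ^ Nat.pred (S k))).
apply derivable_pt_lim_scal, derivable_pt_lim_pow.
simpl Nat.pred. change (fact (S k)) with (S k * fact k)%nat. rewrite mult_INR.
field. split. apply INR_fact_neq_0. apply not_0_INR; lia. Qed.

Section Sel.
Variable sel : mat2 -> R.
Hypothesis Hadd : forall X Y, sel (madd X Y) = sel X + sel Y.
Hypothesis Hsc : forall a X, sel (mscale a X) = a * sel X.

Lemma exp_S A s n : sel (exp_partial A s (S n)) = sel (exp_partial A s n) + cf (S n) s * sel (mpow A (S n)).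
Proof. simpl exp_partial at 1. rewrite Hadd, Hsc. reflexivity. Qed.

Lemma dP A n s : derivable_pt_lim (fun s => sel (exp_partial A s (S n))) s (sel (mmul A (exp_partial A s n))).
Proof. revert s; induction n; intro s.
- apply dl_ext with (fun s => sel mid + cf 1 s * sel (mpow A 1)).
  intros; rewrite exp_S; auto.
  replace (sel (mmul A (exp_partial A s 0))) with (0 + cf 0 s * sel (mpow A 1)).
  apply derivable_pt_lim_plus. apply derivable_pt_lim_const.
  apply dl_ext with (fun s => cf 1 s * (fun _ => sel (mpow A 1)) s). auto.
  replace (cf 0 s * sel (mpow A 1)) with (cf 0 s * sel (mpow A 1) + cf 1 s * 0) by ring.
  apply (derivable_pt_lim_mult (cf 1)). apply dcf. apply derivable_pt_lim_const.
  simpl exp_partial. unfold cf; simpl. rewrite mmul_id_r. field.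
- apply dl_ext with (fun s => sel (exp_partial A s (S n)) + cf (S (S n)) s * sel (mpow A (S (S n)))).
  intros; rewrite (exp_S _ _ (S n)); auto.
  replace (sel (mmul A (exp_partial A s (S n)))) with (sel (mmul A (exp_partial A s n)) + (cf (S n) s * sel (mpow A (S (S n))) + cf (S (S n)) s * 0)).
  apply derivable_pt_lim_plus. apply IHn.
  apply (derivable_pt_lim_mult (cf (S (S n))) (fun _ => sel (mpow A (S (S n))))). apply dcf. apply derivable_pt_lim_const.
  rewrite exp_unf, mmul_addr, Hadd, mmul_scr, Hsc. simpl mpow. ring.
Qed.
End Sel.

Lemma exp0 A n : exp_partial A 0 n = mid.
Proof. induction n; auto. rewrite exp_unf, IHn.
replace (cf (S n) 0) with 0 by (unfold cf; simpl; unfold Rdiv; ring).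
destruct (mpow A (S n)). unfold madd, mscale, mid; simpl. f_equal; ring. Qed.

Lemma dl_eq f x l l' : derivable_pt_lim f x l -> l = l' -> derivable_pt_lim f x l'.
Proof. intros H <-; exact H. Qed.
Lemma dl_plus f g x a b : derivable_pt_lim f x a -> derivable_pt_lim g x b -> derivable_pt_lim (fun t => f t + g t) x (a+b).
Proof. intros; apply derivable_pt_lim_plus; auto. Qed.
Lemma dl_mult f g x a b : derivable_pt_lim f x a -> derivable_pt_lim g x b -> derivable_pt_lim (fun t => f t * g t) x (a * g x + f x * b).
Proof. intros; apply derivable_pt_lim_mult; auto. Qed.
Lemma dl_neg f x l b : derivable_pt_lim f (b - x) l -> derivable_pt_lim (fun t => f (b - t)) x (- l).
Proof. intros H. apply dl_eq with (l * (0 - 1)); [|ring].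
apply (derivable_pt_lim_comp (fun t => b - t) f). 2: exact H.
apply (derivable_pt_lim_minus (fun _ => b) (fun t => t)). apply derivable_pt_lim_const. apply derivable_pt_lim_id. Qed.
Lemma c_plus f g x : continuity_pt f x -> continuity_pt g x -> continuity_pt (fun t => f t + g t) x.
Proof. intros; apply continuity_pt_plus; auto. Qed.
Lemma c_mult f g x : continuity_pt f x -> continuity_pt g x -> continuity_pt (fun t => f t * g t) x.
Proof. intros; apply continuity_pt_mult; auto. Qed.
Lemma c_abs f x : continuity_pt f x -> continuity_pt (fun t => Rabs (f t)) x.
Proof. intros; apply (continuity_pt_comp f Rabs); auto. apply Rcontinuity_abs. Qed.
Lemma cv_ext u w l : (forall n, u n = w n) -> Un_cv u l -> Un_cv w l.
Proof. intros H Hu e He; destruct (Hu e He) as [N HN]; exists N; intros; rewrite <- H; auto. Qed.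

Definition Kn (A : mat2) := Rabs (m11 A) + Rabs (m12 A) + Rabs (m21 A) + Rabs (m22 A).

Lemma rowb x y p q B : Rabs p <= B -> Rabs q <= B -> Rabs (x * p + y * q) <= (Rabs x + Rabs y) * B.
Proof. intros. eapply Rle_trans. apply Rabs_triang. rewrite !Rabs_mult.
pose proof (Rabs_pos x); pose proof (Rabs_pos y).
assert (Rabs x * Rabs p <= Rabs x * B) by (apply Rmult_le_compat_l; auto).
assert (Rabs y * Rabs q <= Rabs y * B) by (apply Rmult_le_compat_l; auto). lra. Qed.

Lemma Kn_pos A : 0 <= Kn A.
Proof. unfold Kn; pose proof (Rabs_pos (m11 A)); pose proof (Rabs_pos (m12 A)); pose proof (Rabs_pos (m21 A)); pose proof (Rabs_pos (m22 A)); lra. Qed.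

Lemma powb A k : Rabs (m11 (mpow A k)) <= Kn A ^ k /\ Rabs (m12 (mpow A k)) <= Kn A ^ k /\
  Rabs (m21 (mpow A k)) <= Kn A ^ k /\ Rabs (m22 (mpow A k)) <= Kn A ^ k.
Proof. induction k as [|k [H1 [H2 [H3 H4]]]].
- simpl; rewrite Rabs_R1, Rabs_R0; lra.
- pose proof (Kn_pos A). assert (0 <= Kn A ^ k) by (apply pow_le; auto).
  pose proof (Rabs_pos (m11 A)); pose proof (Rabs_pos (m12 A)); pose proof (Rabs_pos (m21 A)); pose proof (Rabs_pos (m22 A)).
  simpl mpow; unfold mmul; simpl; unfold Kn in *; repeat split.
  + eapply Rle_trans. apply rowb; eauto. nra.
  + eapply Rle_trans. apply rowb; eauto. nra.
  + eapply Rle_trans. apply rowb; eauto. nra.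
  + eapply Rle_trans. apply rowb; eauto. nra.
Qed.

Lemma Qlem A s m : msub (mmul (exp_partial A s (S m)) A) (mmul A (exp_partial A s m)) = mscale (cf (S m) s) (mpow A (S (S m))).
Proof. rewrite exp_unf, mmul_addl, mmul_scl, <- exp_comm.
change (mpow A (S (S m))) with (mmul A (mpow A (S m))). rewrite mpow_comm.
generalize (mmul A (exp_partial A s m)) (mmul (mpow A (S m)) A). intros. mat. Qed.

Lemma cf_pos k s : 0 <= s -> 0 <= cf k s.
Proof. intros; unfold cf. apply Rmult_le_pos. apply pow_le; auto. left; apply Rinv_0_lt_compat, INR_fact_lt_0. Qed.

Section Row.
Variables selA selB : mat2 -> R.
Hypothesis HaddA : forall X Y, selA (madd X Y) = selA X + selA Y.
Hypothesis HscA : forall a X, selA (mscale a X) = a * selA X.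
Hypothesis HsubA : forall X Y, selA (msub X Y) = selA X - selA Y.
Hypothesis HaddB : forall X Y, selB (madd X Y) = selB X + selB Y.
Hypothesis HscB : forall a X, selB (mscale a X) = a * selB X.
Hypothesis HsubB : forall X Y, selB (msub X Y) = selB X - selB Y.
Hypothesis HmA : forall X Y, selA (mmul X Y) = selA X * m11 Y + selB X * m21 Y.
Hypothesis HmB : forall X Y, selB (mmul X Y) = selA X * m12 Y + selB X * m22 Y.
Variable A : mat2.
Hypothesis HbA : forall k, Rabs (selA (mpow A k)) <= Kn A ^ k.
Hypothesis HbB : forall k, Rabs (selB (mpow A k)) <= Kn A ^ k.

Lemma row_flow a b E z1 z2 : a < b ->
  Un_cv (fun n => selA (exp_partial A (b - a) n)) (selA E) ->
  Un_cv (fun n => selB (exp_partial A (b - a) n)) (selB E) ->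
  (forall t, a <= t <= b -> continuity_pt z1 t /\ continuity_pt z2 t) ->
  (forall t, a < t < b -> derivable_pt_lim z1 t (vi (mvmul A (V2 (z1 t) (z2 t)))) /\ derivable_pt_lim z2 t (vv (mvmul A (V2 (z1 t) (z2 t))))) ->
  selA mid * z1 b + selB mid * z2 b = selA E * z1 a + selB E * z2 a.
Proof.
intros Hab HcA HcB Hcont Hder.
set (g := fun m t => selA (exp_partial A (b - t) (S m)) * z1 t + selB (exp_partial A (b-t) (S m)) * z2 t).
set (D := fun m t => selA (mscale (cf (S m) (b-t)) (mpow A (S (S m)))) * z1 t + selB (mscale (cf (S m) (b-t)) (mpow A (S (S m)))) * z2 t).
assert (HD : forall m t, a < t < b -> derivable_pt_lim (g m) t (D m t)).
{ intros m t Ht. destruct (Hder t Ht) as [D1 D2]. unfold g.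
  eapply dl_eq. apply dl_plus; apply dl_mult.
  apply (dl_neg (fun s => selA (exp_partial A s (S m)))), (dP _ HaddA HscA). exact D1.
  apply (dl_neg (fun s => selB (exp_partial A s (S m)))), (dP _ HaddB HscB). exact D2.
  unfold D. rewrite <- Qlem, !HsubA, !HsubB, !HmA, !HmB. simpl. ring. }
assert (HC : forall m t, continuity_pt (g m) t \/ ~ (a <= t <= b) -> True) by auto.
assert (Hcs : forall m t, continuity_pt (fun t => selA (exp_partial A (b - t) (S m))) t /\ continuity_pt (fun t => selB (exp_partial A (b - t) (S m))) t).
{ intros m t; split; eapply dl_cont.
  apply (dl_neg (fun s => selA (exp_partial A s (S m)))), (dP _ HaddA HscA).
  apply (dl_neg (fun s => selB (exp_partial A s (S m)))), (dP _ HaddB HscB). }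
assert (Hgc : forall m t, a <= t <= b -> continuity_pt (g m) t).
{ intros m t Ht. destruct (Hcs m t); destruct (Hcont t Ht). unfold g. apply c_plus; apply c_mult; auto. }
destruct (continuity_ab_maj (fun t => Rabs (z1 t)) a b) as [M1 [HM1 _]]. lra.
{ intros; apply c_abs; apply Hcont; auto. }
destruct (continuity_ab_maj (fun t => Rabs (z2 t)) a b) as [M2 [HM2 _]]. lra.
{ intros; apply c_abs; apply Hcont; auto. }
set (B := Rabs (z1 M1) + Rabs (z2 M2)).
set (K := Kn A).
apply lim_eq with (u := fun m => g m a) (w := fun m => (b - a) * K * B * (((b - a) * K) ^ (S m) / INR (fact (S m)))).
- apply cv_ext with (fun m => z1 a * selA (exp_partial A (b-a) (S m)) + z2 a * selB (exp_partial A (b-a) (S m))).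
  { intros; unfold g; ring. }
  replace (selA E * z1 a + selB E * z2 a) with (z1 a * selA E + z2 a * selB E) by ring.
  apply cv_lin; apply (cv_S (fun n => _ (exp_partial A (b-a) n))); auto.
- replace 0 with ((b - a) * K * B * 0) by ring.
  apply CV_mult. apply cv_const. apply (cv_S (fun n => ((b - a) * K) ^ n / INR (fact n))), cv_speed_pow_fact.
- intro m. destruct (MVT_gen (g m) a b (D m)) as [c [Hc Heq]].
  { intros x Hx; rewrite Rmin_left, Rmax_right in Hx by lra; apply is_derive_Reals; apply HD; auto. }
  { intros x Hx; rewrite Rmin_left, Rmax_right in Hx by lra; apply Hgc; auto. }
  rewrite Rmin_left, Rmax_right in Hc by lra.
  assert (Hgb : g m b = selA mid * z1 b + selB mid * z2 b) by (unfold g; rewrite Rminus_diag, exp0; auto).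
  rewrite <- Hgb, Heq.
  assert (Hw : (b - a) * K * B * (((b - a) * K) ^ S m / INR (fact (S m))) = (cf (S m) (b-a) * K^(S (S m)) * B) * (b - a)).
  { rewrite Rpow_mult_distr. unfold cf, Rdiv. simpl. ring. }
  rewrite Hw, Rabs_mult, (Rabs_right (b - a)) by lra.
  apply Rmult_le_compat_r. lra.
  unfold D. rewrite HscA, HscB.
  set (X := mpow A (S (S m))).
  replace (cf (S m) (b - c) * selA X * z1 c + cf (S m) (b - c) * selB X * z2 c) with (cf (S m) (b - c) * (selA X * z1 c + selB X * z2 c)) by ring.
  rewrite Rabs_mult, (Rabs_right (cf _ _)) by (apply Rle_ge, cf_pos; lra).
  assert (Hcf : cf (S m) (b - c) <= cf (S m) (b - a)).
  { unfold cf, Rdiv. apply Rmult_le_compat_r. left; apply Rinv_0_lt_compat, INR_fact_lt_0. apply pow_incr; lra. }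
  assert (HX : Rabs (selA X * z1 c + selB X * z2 c) <= K ^ (S (S m)) * B).
  { eapply Rle_trans. apply Rabs_triang. rewrite !Rabs_mult.
    pose proof (HM1 c Hc); pose proof (HM2 c Hc).
    pose proof (HbA (S (S m))) as H1; pose proof (HbB (S (S m))) as H2. fold X in H1, H2. fold K in H1, H2.
    assert (0 <= K ^ (S (S m))) by (apply pow_le, Kn_pos). set (P := K ^ (S (S m))) in *.
    pose proof (Rabs_pos (z1 c)); pose proof (Rabs_pos (z2 c)); pose proof (Rabs_pos (selA X)); pose proof (Rabs_pos (selB X)).
    unfold B. nra. }
  rewrite Rmult_assoc. apply Rmult_le_compat; auto. apply cf_pos; lra. apply Rabs_pos.
Qed.
End Row.

Lemma flow A a b E z1 z2 : a < b -> is_mexp A (b - a) E ->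
  (forall t, a <= t <= b -> continuity_pt z1 t /\ continuity_pt z2 t) ->
  (forall t, a < t < b -> derivable_pt_lim z1 t (vi (mvmul A (V2 (z1 t) (z2 t)))) /\ derivable_pt_lim z2 t (vv (mvmul A (V2 (z1 t) (z2 t))))) ->
  z1 b = m11 E * z1 a + m12 E * z2 a /\ z2 b = m21 E * z1 a + m22 E * z2 a.
Proof. intros Hab [H11 [H12 [H21 H22]]] Hc Hd. split.
- pose proof (row_flow m11 m12) as R. simpl in R.
  refine (eq_trans _ (R _ _ _ _ _ _ _ _ A _ _ a b E z1 z2 Hab H11 H12 Hc Hd)); try (intros [] []; reflexivity); try (intros ? []; reflexivity); try ring.
  all: try (intro k; apply powb).
- pose proof (row_flow m21 m22) as R. simpl in R.
  refine (eq_trans _ (R _ _ _ _ _ _ _ _ A _ _ a b E z1 z2 Hab H21 H22 Hc Hd)); try (intros [] []; reflexivity); try (intros ? []; reflexivity); try ring.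
  all: try (intro k; apply powb).
Qed.

Definition msym (X : mat2) := M2 (m11 X) (- m12 X) (- m21 X) (m22 X).
Lemma msym_mul X Y : mmul (msym X) (msym Y) = msym (mmul X Y).
Proof. unfold msym; mat. Qed.
Lemma msym_pow X k : mpow (msym X) k = msym (mpow X k).
Proof. induction k; simpl. unfold msym, mid; simpl; rewrite Ropp_0; reflexivity. rewrite IHk, msym_mul; auto. Qed.
Lemma msym_exp X s n : exp_partial (msym X) s n = msym (exp_partial X s n).
Proof. induction n. simpl. unfold msym, mid; simpl; rewrite Ropp_0; reflexivity.
rewrite !exp_unf, IHn, msym_pow. unfold msym, madd, mscale; simpl. f_equal; ring. Qed.

Lemma sym_E A s E1 E2 : is_mexp A s E1 -> is_mexp (msym A) s E2 ->
  m11 E2 = m11 E1 /\ m12 E2 = - m12 E1 /\ m21 E2 = - m21 E1 /\ m22 E2 = m22 E1.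
Proof. intros [H11 [H12 [H21 H22]]] [G11 [G12 [G21 G22]]].
repeat split.
- apply UL_sequence with (fun n => m11 (exp_partial (msym A) s n)); auto.
  apply cv_ext with (fun n => m11 (exp_partial A s n)); auto. intro; rewrite msym_exp; reflexivity.
- apply UL_sequence with (fun n => m12 (exp_partial (msym A) s n)); auto.
  apply cv_ext with (opp_seq (fun n => m12 (exp_partial A s n))). intro; rewrite msym_exp; reflexivity. apply CV_opp; auto.
- apply UL_sequence with (fun n => m21 (exp_partial (msym A) s n)); auto.
  apply cv_ext with (opp_seq (fun n => m21 (exp_partial A s n))). intro; rewrite msym_exp; reflexivity. apply CV_opp; auto.
- apply UL_sequence with (fun n => m22 (exp_partial (msym A) s n)); auto.
  apply cv_ext with (fun n => m22 (exp_partial A s n)); auto. intro; rewrite msym_exp; reflexivity.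
Qed.

Lemma comm11 A s E : is_mexp A s E -> m11 A * m11 E + m12 A * m21 E = m11 E * m11 A + m12 E * m21 A.
Proof. intros [H11 [H12 [H21 H22]]].
apply UL_sequence with (fun n => m11 A * m11 (exp_partial A s n) + m12 A * m21 (exp_partial A s n)).
apply cv_lin; auto.
apply cv_ext with (fun n => m11 A * m11 (exp_partial A s n) + m21 A * m12 (exp_partial A s n)).
intro n; pose proof (f_equal m11 (exp_comm A s n)) as H; simpl in H; lra.
replace (m11 E * m11 A + m12 E * m21 A) with (m11 A * m11 E + m21 A * m12 E) by ring. apply cv_lin; auto. Qed.

Lemma comm21 A s E : is_mexp A s E -> m21 A * m11 E + m22 A * m21 E = m21 E * m11 A + m22 E * m21 A.
Proof. intros [H11 [H12 [H21 H22]]].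
apply UL_sequence with (fun n => m21 A * m11 (exp_partial A s n) + m22 A * m21 (exp_partial A s n)).
apply cv_lin; auto.
apply cv_ext with (fun n => m11 A * m21 (exp_partial A s n) + m21 A * m22 (exp_partial A s n)).
intro n; pose proof (f_equal m21 (exp_comm A s n)) as H; simpl in H; lra.
replace (m21 E * m11 A + m22 E * m21 A) with (m11 A * m21 E + m21 A * m22 E) by ring. apply cv_lin; auto. Qed.

Lemma inv_cancel M w : mdet M <> 0 -> mvmul M (mvmul (minv M) w) = w.
Proof. intros H; destruct M, w; unfold minv, mvmul, mscale; simpl; unfold mdet in *; simpl in *; f_equal; field; auto. Qed.

Lemma cont_loc f g x d : 0 < d -> (forall y, Rabs (y - x) < d -> f y = g y) -> continuity_pt f x -> continuity_pt g x.
Proof. intros Hd H Hf eps He. destruct (Hf eps He) as [al [Hal Hf']].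
exists (Rmin al d); split. apply Rmin_pos; lra.
intros y [Hdx Hy]. simpl in *; unfold R_dist in *.
rewrite <- !H. apply Hf'. split. exact Hdx. apply Rlt_le_trans with (1:=Hy); apply Rmin_l.
rewrite Rminus_diag, Rabs_R0; auto. apply Rlt_le_trans with (1:=Hy); apply Rmin_r. Qed.

Lemma dl_subc f x l c : derivable_pt_lim f x l -> derivable_pt_lim (fun t => f t - c) x l.
Proof. intros H. apply dl_eq with (l - 0); [|ring]. apply (derivable_pt_lim_minus f (fun _ => c)); auto. apply derivable_pt_lim_const. Qed.

Lemma c_subc f x c : continuity_pt f x -> continuity_pt (fun t => f t - c) x.
Proof. intros H. apply (continuity_pt_minus f (fun _ => c)); auto. apply continuity_pt_const; intros ? ?; auto. Qed.

Theorem proposition1 (Rr L C Vdc T : R)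
  (HR : 0 < Rr) (HL : 0 < L) (HC : 0 < C) (HV : 0 < Vdc) (HT : 0 < T)
  (E1 E2 : mat2)
  (hE1 : is_mexp (Am1 Rr L C) (T / 2) E1)
  (hE2 : is_mexp (Am2 Rr L C) (T / 2) E2)
  (hinv : mdet (msub mid (mmul E2 E1)) <> 0)
  (i v : R -> R)
  (* continuity of the solution on [0, oo) *)
  (hcont : forall t, 0 < t -> continuity_pt i t /\ continuity_pt v t)
  (hcont0 : limit1_in i (fun s => 0 < s) (i 0) 0 /\ limit1_in v (fun s => 0 < s) (v 0) 0)
  (* x' = A1 x + b1 on [(k-1)T, (k-1)T + T/2], k = 1, 2, ... (here k' = k - 1) *)
  (hode1 : forall (k : nat) (t : R), INR k * T < t < INR k * T + T / 2 ->
     derivable_pt_lim i t (vi (vadd (mvmul (Am1 Rr L C) (V2 (i t) (v t))) (bv1 L Vdc))) /\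
     derivable_pt_lim v t (vv (vadd (mvmul (Am1 Rr L C) (V2 (i t) (v t))) (bv1 L Vdc))))
  (* x' = A2 x on [(k-1)T + T/2, kT] *)
  (hode2 : forall (k : nat) (t : R), INR k * T + T / 2 < t < INR (S k) * T ->
     derivable_pt_lim i t (vi (mvmul (Am2 Rr L C) (V2 (i t) (v t)))) /\
     derivable_pt_lim v t (vv (mvmul (Am2 Rr L C) (V2 (i t) (v t)))))
  (hinit : V2 (i 0) (v 0) = xp0 Rr L C Vdc E1 E2) :
  i 0 = i (T / 2) /\ i (T / 2) = i T.
Proof.
assert (HT2 : 0 < T / 2) by lra.
assert (Hext : forall f : R -> R, limit1_in f (fun s => 0 < s) (f 0) 0 -> continuity_pt (fun t => f (Rmax 0 t)) 0).
{ intros f Hf eps He. destruct (Hf eps He) as [al [Hal Hf']]. exists al; split; auto.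
  intros y [_ Hy]. simpl in *. unfold R_dist in *. rewrite (Rmax_left 0 0) by lra.
  destruct (Rlt_or_le 0 y).
  - rewrite Rmax_right by lra. apply Hf'; split; auto.
  - rewrite Rmax_left by lra. rewrite Rminus_diag, Rabs_R0; lra. }
assert (Hloc : forall f : R -> R, forall t, 0 < t -> forall y, Rabs (y - t) < t -> f y = f (Rmax 0 y)).
{ intros f t Ht y Hy. rewrite Rmax_right; auto. apply Rabs_def2 in Hy. lra. }
destruct (flow (Am1 Rr L C) 0 (T/2) E1 (fun t => i (Rmax 0 t)) (fun t => v (Rmax 0 t) - Vdc)) as [F1a F1b].
- lra.
- rewrite Rminus_0_r; exact hE1.
- intros t Ht. destruct (Rle_lt_or_eq_dec 0 t (proj1 Ht)) as [Hp | <-].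
  + destruct (hcont t Hp). split. apply cont_loc with i t; auto. exact (Hloc i t Hp). apply c_subc. apply cont_loc with v t; auto. exact (Hloc v t Hp).
  + split. apply Hext, hcont0. apply c_subc, Hext, hcont0.
- intros t Ht. assert (Ht' : INR 0%nat * T < t < INR 0%nat * T + T / 2) by (simpl; lra).
  destruct (hode1 0%nat t Ht') as [D1 D2]. rewrite (Rmax_right 0 t) by lra. split.
  + eapply dl_eq. apply dl_loc with i t. lra. exact (Hloc i t ltac:(lra)). exact D1. unfold Am1, bv1, mvmul, vadd; simpl. field. lra.
  + eapply dl_eq. apply dl_loc with (fun y => v y - Vdc) t; [lra| |]. intros; rewrite <- Hloc with v t y; auto; lra.
    apply dl_subc. exact D2. unfold Am1, bv1, mvmul, vadd; simpl. field. lra.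
- destruct (flow (Am2 Rr L C) (T/2) T E2 i v) as [F2a F2b].
  + lra.
  + replace (T - T/2) with (T/2) by field. exact hE2.
  + intros t Ht; apply hcont; lra.
  + intros t Ht. apply (hode2 0%nat t). simpl; lra.
  + rewrite (Rmax_right 0 (T/2)), (Rmax_left 0 0) in * by lra.
    assert (Hs : msym (Am1 Rr L C) = Am2 Rr L C) by (unfold msym, Am1, Am2; simpl; f_equal; ring).
    rewrite <- Hs in hE2.
    destruct (sym_E _ _ _ _ hE1 hE2) as [S11 [S12 [S21 S22]]].
    pose proof (comm11 _ _ _ hE1) as K1. pose proof (comm21 _ _ _ hE1) as K2.
    apply (f_equal (mvmul (msub mid (mmul E2 E1)))) in hinit. unfold xp0 in hinit. rewrite inv_cancel in hinit by auto.
    assert (H1 := f_equal vi hinit). assert (H2 := f_equal vv hinit). clear hinit.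
    destruct E1 as [e11 e12 e21 e22], E2 as [f11 f12 f21 f22]. simpl in *. subst f11 f12 f21 f22.
    unfold mdet, msub, mmul, mid, minv, mscale, mvmul, bv1, Am1 in *; simpl in *.
    set (p := i 0) in *; set (q := v 0) in *; set (ph := i (T/2)) in *; set (qh := v (T/2)) in *.
    clearbody p q ph qh. clear hcont hcont0 hode1 hode2 Hext Hloc hE1 hE2 Hs.
    assert (E21 : e21 = -(L/C) * e12).
    { apply Rmult_eq_reg_l with (-(1/L)). 2: (apply Ropp_neq_0_compat; unfold Rdiv; rewrite Rmult_1_l; apply Rinv_neq_0_compat; lra).
      replace (-(1/L) * (-(L/C) * e12)) with (e12 * (1/C)) by (field; lra). lra. }
    assert (E11 : e11 = e22 + Rr * e12).
    { assert (Z : 1/C*(e11 - e22 - Rr*e12) = (1/C*e11 + 0*e21) - (e21 * -(Rr/L) + e22*(1/C))).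
      { rewrite E21. field. lra. }
      rewrite K2, Rminus_diag in Z. apply Rmult_integral in Z. destruct Z as [Z|Z].
      exfalso. unfold Rdiv in Z. rewrite Rmult_1_l in Z. apply (Rinv_neq_0_compat C); lra. lra. }
    assert (H1' : (1 - (e11*e11 + -e12*e21))*p + (0 - (e11*e12 + -e12*e22))*q = e11*(-e12*Vdc) - e12*((1-e22)*Vdc)).
    { rewrite H1. rewrite E21, E11. field. lra. }
    assert (H2' : (0 - (- e21 * e11 + e22 * e21)) * p + (1 - (- e21 * e12 + e22 * e22)) * q = -e21*(-e12*Vdc) + e22*((1-e22)*Vdc)).
    { rewrite H2. rewrite E21, E11. field. lra. }
    clear H1 H2 K1 K2 E21 E11.
    assert (Z1 : (1+e11)*(e11*p + e12*(q - Vdc) - p) - e12*(e21*p + e22*(q - Vdc) + q) = 0) by nra.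
    assert (Z2 : e21*(e11*p + e12*(q - Vdc) - p) + (1-e22)*(e21*p + e22*(q - Vdc) + q) = 0) by nra.
    set (D := (1+e11)*(1-e22) + e12*e21).
    assert (HD : D <> 0).
    { intro HD0. apply hinv. replace ((1 - (e11 * e11 + - e12 * e21)) * (1 - (- e21 * e12 + e22 * e22)) -
    (0 - (e11 * e12 + - e12 * e22)) * (0 - (- e21 * e11 + e22 * e21))) with (((1-e11)*(1+e22)+e12*e21) * D) by (unfold D; ring).
      rewrite HD0; ring. }
    set (u1 := e11*p + e12*(q - Vdc) - p) in *. set (u2 := e21*p + e22*(q - Vdc) + q) in *.
    assert (U1 : D * u1 = 0).
    { replace (D*u1) with ((1-e22)*((1+e11)*u1 - e12*u2) + e12*(e21*u1 + (1-e22)*u2)) by (unfold D; ring). rewrite Z1, Z2; ring. }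
    assert (U2 : D * u2 = 0).
    { replace (D*u2) with (-e21*((1+e11)*u1 - e12*u2) + (1+e11)*(e21*u1 + (1-e22)*u2)) by (unfold D; ring). rewrite Z1, Z2; ring. }
    apply Rmult_integral in U1; destruct U1 as [U1|U1]; [contradiction|].
    apply Rmult_integral in U2; destruct U2 as [U2|U2]; [contradiction|].
    unfold u1, u2 in *.
    assert (Hph : ph = p) by lra.
    assert (Hqh : qh = Vdc - q) by lra.
    split. auto. rewrite F2a, Hph, Hqh. lra.
Qed.
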